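(* In every instance of the Balancing with Conflicts game with $m=2$ machines, every state $\vec s^*$ minimizing the social cost is a strong Nash equilibrium. In particular, a strong Nash equilibrium always exists and the strong price of stability equals $1$.
   Context: An instance of the Balancing with Conflicts (BwC) game consists of: - players $N=\{1,\dots,n\}$; - machines $M=\{1,\dots,m\}$; - a simple undirected graph $G=(N,E)$. A state is $\vec s\in M^n$, with $X_k(\vec s)=\{i:s_i=k\}$ and $x_k(\vec s)=|X_k(\vec s)|$. For $X\subseteq N$, $e(X)$ is the number of edges with both endpoints in $X$, and $e(\{i\},X)$ is the number of neighbours of $i$ in $X$. The cost of player $i$ with $s_i=k$ is $c_i(\vec s)=x_k(\vec s)+e(\{i\},X_k(\vec s))$. The social cost is $$c(\vec s)=\sum_ic_i(\vec s)=\sum_k\big(x_k(\vec s)^2+2e(X_k(\vec s))\big).$$ A state $\vec s$ is a strong Nash equilibrium if for every nonempty coalition $C\subseteq N$ and every joint deviation $\vec s_C'\in M^C$, some $i\in C$ has $c_i(\vec s)\le c_i(\vec s_C',\vec s_{-C})$. The strong price of stability is the minimum over strong Nash equilibria $\vec s$ of $c(\vec s)/\min_{\vec t}c(\vec t)$. *)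

(* Defs.v *)
From mathcomp Require Import all_boot all_order.
Set Implicit Arguments. Unset Strict Implicit. Unset Printing Implicit Defensive.

(* Players are 'I_n, machines are 'I_m, a state is a finite function
   'I_n -> 'I_m.  The conflict graph G is a simple undirected graph given by a
   symmetric irreflexive relation on players. *)
Definition simple_graph (n : nat) (G : rel 'I_n) : Prop :=
  (forall i, ~~ G i i) /\ (forall i j, G i j = G j i).

Definition state (n m : nat) := {ffun 'I_n -> 'I_m}.

Definition load_set n m (s : state n m) (k : 'I_m) : {set 'I_n} :=
  [set i | s i == k].

Definition load n m (s : state n m) (k : 'I_m) : nat := #|load_set s k|.

Definition nbrs_in n (G : rel 'I_n) (i : 'I_n) (X : {set 'I_n}) : nat :=
  #|[set j in X | G i j]|.

Definition pcost n m (G : rel 'I_n) (s : state n m) (i : 'I_n) : nat :=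
  load s (s i) + nbrs_in G i (load_set s (s i)).

Definition scost n m (G : rel 'I_n) (s : state n m) : nat :=
  \sum_(i < n) pcost G s i.

Definition deviate n m (s : state n m) (C : {set 'I_n}) (t : state n m)
  : state n m := [ffun i => if i \in C then t i else s i].

Definition strongNE n m (G : rel 'I_n) (s : state n m) : Prop :=
  forall (C : {set 'I_n}) (t : state n m), C != set0 ->
    exists2 i, i \in C & pcost G s i <= pcost G (deviate s C t) i.

Definition social_optimum n m (G : rel 'I_n) (s : state n m) : Prop :=
  forall t : state n m, scost G s <= scost G t.

(* Main.v *)
Require Import Defs.
From mathcomp Require Import all_boot all_order.
From mathcomp Require Import zify.
Set Implicit Arguments. Unset Strict Implicit. Unset Printing Implicit Defensive.

Lemma card_sumE (n : nat) (A : {set 'I_n}) : #|A| = \sum_j (j \in A : nat).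
Proof.
rewrite -sum1_card big_mkcond /=; apply: eq_bigr => j _; by case: (j \in A).
Qed.

Lemma pcostE n m (G : rel 'I_n) (s : state n m) i :
  pcost G s i = \sum_j (s i == s j) * (1 + G i j).
Proof.
rewrite /pcost /nbrs_in /load !card_sumE -big_split /=; apply: eq_bigr => j _.
rewrite !inE eq_sym; by case: (s i == s j); case: (G i j).
Qed.

Lemma sym_double n (d : 'I_n -> nat) (F : 'I_n -> 'I_n -> nat) :
  (forall i j, F i j = F j i) ->
  2 * \sum_i d i * \sum_j F i j = \sum_i \sum_j (d i + d j) * F i j.
Proof.
move=> Fs.
have -> : \sum_i \sum_j (d i + d j) * F i j =
  \sum_i \sum_j d i * F i j + \sum_i \sum_j d j * F i j.
  rewrite -big_split /=; apply: eq_bigr => i _; rewrite -big_split /=.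
  by apply: eq_bigr => j _; rewrite mulnDl.
rewrite [X in _ = _ + X]exchange_big /=.
have -> : \sum_j \sum_i d j * F i j = \sum_i \sum_j d i * F i j.
  by apply: eq_bigr => i _; apply: eq_bigr => j _; rewrite Fs.
rewrite addnn -mul2n; congr (2 * _); apply: eq_bigr => i _; by rewrite big_distrr.
Qed.

Lemma flip2 (a b c d : 'I_2) :
  ((c == d) : nat) + ((a != c) + (b != d)) * (a == b) =
  (a == b) + ((a != c) + (b != d)) * (c == d).
Proof.
by move: a b c d => [[|[|?]] ?] [[|[|?]] ?] [[|[|?]] ?] [[|[|?]] ?].
Qed.

Lemma key n (G : rel 'I_n) (s s' : state n 2) :
  simple_graph G ->
  scost G s' + 2 * \sum_i (s i != s' i) * pcost G s i =
  scost G s + 2 * \sum_i (s i != s' i) * pcost G s' i.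
Proof.
case=> _ Gs.
have E : forall (t : state n 2) i, pcost G t i = \sum_j (t i == t j) * (1 + G i j)
  by move=> t i; apply: pcostE.
rewrite /scost.
rewrite (eq_bigr (fun i => \sum_j (s' i == s' j) * (1 + G i j))); last by move=> i _; apply: E.
rewrite [X in _ = X + _](eq_bigr (fun i => \sum_j (s i == s j) * (1 + G i j))); last by move=> i _; apply: E.
rewrite [X in _ + 2 * X = _](eq_bigr (fun i => (s i != s' i) * \sum_j (s i == s j) * (1 + G i j))); last by move=> i _; rewrite E.
rewrite [X in _ = _ + 2 * X](eq_bigr (fun i => (s i != s' i) * \sum_j (s' i == s' j) * (1 + G i j))); last by move=> i _; rewrite E.
rewrite (@sym_double _ (fun i => (s i != s' i) : nat) (fun i j => (s i == s j) * (1 + G i j))); last first.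
  by move=> i j; rewrite eq_sym Gs.
rewrite (@sym_double _ (fun i => (s i != s' i) : nat) (fun i j => (s' i == s' j) * (1 + G i j))); last first.
  by move=> i j; rewrite eq_sym Gs.
rewrite -!big_split /=; apply: eq_bigr => i _; rewrite -!big_split /=.
apply: eq_bigr => j _.
by rewrite !mulnA -!mulnDl flip2.
Qed.

Theorem theorem13 (n : nat) (G : rel 'I_n) :
  simple_graph G ->
  (forall s : state n 2, social_optimum G s -> strongNE G s) /\
  (exists s : state n 2, strongNE G s /\ social_optimum G s).
Proof.
move=> Gsimp.
have NE : forall s : state n 2, social_optimum G s -> strongNE G s.
  move=> s opt C t C0.
  set s' := deviate s C t.
  case: (boolP [exists i in C, pcost G s i <= pcost G s' i]).
    by case/exists_inP => i iC le; exists i.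
  move/exists_inPn => H.
  have HC : forall i, i \in C -> pcost G s' i < pcost G s i.
    by move=> i iC; rewrite ltnNge H.
  case: (boolP [exists i, s i != s' i]); last first.
    move/existsPn => eqs.
    have ss : s' = s by apply/ffunP => i; move: (eqs i); rewrite negbK => /eqP.
    case/set0Pn: C0 => i iC.
    by move: (HC i iC); rewrite ss ltnn.
  case/existsP => i0 ni0.
  have DC : forall i, s i != s' i -> i \in C.
    move=> i; rewrite /s' /deviate ffunE; by case: (i \in C) => //; rewrite eqxx.
  have lt : \sum_i (s i != s' i) * pcost G s' i < \sum_i (s i != s' i) * pcost G s i.
    rewrite (bigD1 i0) //= [X in _ < X](bigD1 i0) //= ni0 !mul1n.
    have h1 := HC i0 (DC i0 ni0).
    rewrite -addSn; apply: leq_add => //.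
    apply: leq_sum => i _; case: (boolP (s i != s' i)) => //= ni.
    by rewrite !mul1n ltnW // HC // DC.
  have K := key s s' Gsimp.
  have := opt s'.
  move: K lt; set a := scost G s'; set b := scost G s.
  set x := \sum_i _ * pcost G s' i; set y := \sum_i _ * pcost G s i.
  move=> K lt le.
  lia.
split => //.
pose s0 : state n 2 := [ffun _ => ord0].
case: (@arg_minnP _ s0 xpredT (scost G) erefl) => s _ smin.
have opt : social_optimum G s by move=> t; apply: smin.
by exists s; split => //; apply: NE.
Qed.
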